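(* Let $\alpha_1,\alpha_2,\alpha_3\in(0,\pi)$ with $\alpha_1+\alpha_2+\alpha_3=2\pi$ and $\alpha_2\ge\alpha_1$. Then $$(\sin\alpha_1+\sin\alpha_2+\sin\alpha_3)^2<\Big[\big(\sin\tfrac{\alpha_3}{2}-\sin\tfrac{\alpha_2-\alpha_1}{2}\big)\sin\alpha_2+\big(\sin\tfrac{\alpha_3}{2}+\sin\tfrac{\alpha_2-\alpha_1}{2}\big)\sin\alpha_1\Big]^2+\Big[(\sin\alpha_1+\sin\alpha_2)\big(\cos\tfrac{\alpha_3}{2}+\cos\tfrac{\alpha_2-\alpha_1}{2}\big)\Big]^2.$$ Equivalently, if $\sigma_{12},\sigma_{13},\sigma_{23}>0$ satisfy $\sin\alpha_1/\sigma_{23}=\sin\alpha_2/\sigma_{13}=\sin\alpha_3/\sigma_{12}$, then $$(\sigma_{12}+\sigma_{13}+\sigma_{23})^2<\Big[\big(\sin\tfrac{\alpha_3}{2}-\sin\tfrac{\alpha_2-\alpha_1}{2}\big)\sigma_{13}+\big(\sin\tfrac{\alpha_3}{2}+\sin\tfrac{\alpha_2-\alpha_1}{2}\big)\sigma_{23}\Big]^2+\Big[(\sigma_{13}+\sigma_{23})\big(\cos\tfrac{\alpha_3}{2}+\cos\tfrac{\alpha_2-\alpha_1}{2}\big)\Big]^2.$$ *)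

(* Defs.v *)
From Stdlib Require Import Reals.
Open Scope R_scope.

(* Main.v *)
Require Import Defs.
From Stdlib Require Import Reals Lra Psatz.
Open Scope R_scope.

Lemma part1 (a1 a2 a3 : R) :
  0 < a1 < PI -> 0 < a2 < PI -> 0 < a3 < PI ->
  a1 + a2 + a3 = 2 * PI -> a1 <= a2 ->
  (sin a1 + sin a2 + sin a3) ^ 2 <
     ((sin (a3 / 2) - sin ((a2 - a1) / 2)) * sin a2
      + (sin (a3 / 2) + sin ((a2 - a1) / 2)) * sin a1) ^ 2
     + ((sin a1 + sin a2) * (cos (a3 / 2) + cos ((a2 - a1) / 2))) ^ 2.
Proof.
  intros H1 H2 H3 Hs Hle.
  set (x := a1 / 2). set (y := a2 / 2).
  assert (Ea1 : a1 = 2 * x) by (unfold x; field).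
  assert (Ea2 : a2 = 2 * y) by (unfold y; field).
  assert (Ea3h : a3 / 2 = PI - (x + y)) by (unfold x, y; lra).
  assert (Ed : (a2 - a1) / 2 = y - x) by (unfold x, y; lra).
  assert (Ea3 : a3 = 2 * (a3 / 2)) by field.
  set (sx := sin x). set (cx := cos x). set (sy := sin y). set (cy := cos y).
  assert (px : sx^2 + cx^2 = 1) by (unfold sx, cx; pose proof (sin2_cos2 x); unfold Rsqr in *; lra).
  assert (py : sy^2 + cy^2 = 1) by (unfold sy, cy; pose proof (sin2_cos2 y); unfold Rsqr in *; lra).
  set (P := sx * cy + cx * sy). set (Q := cx * cy - sx * sy).
  set (E := sy * cx - cy * sx). set (C := cy * cx + sy * sx).
  assert (HP : sin (a3/2) = P) by (rewrite Ea3h, sin_PI_x, sin_plus; reflexivity).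
  assert (HQ : cos (a3/2) = - Q) by (rewrite Ea3h, Rtrigo_facts.cos_pi_minus, cos_plus; reflexivity).
  assert (HE : sin ((a2 - a1)/2) = E) by (rewrite Ed, sin_minus; reflexivity).
  assert (HC : cos ((a2 - a1)/2) = C) by (rewrite Ed, cos_minus; reflexivity).
  assert (S1 : sin a1 = 2 * sx * cx) by (rewrite Ea1, sin_2a; reflexivity).
  assert (S2 : sin a2 = 2 * sy * cy) by (rewrite Ea2, sin_2a; reflexivity).
  assert (S3 : sin a3 = 2 * P * (- Q)) by (rewrite Ea3, sin_2a, HP, HQ; reflexivity).
  assert (Psx : 0 < sx) by (apply sin_gt_0; unfold x; lra).
  assert (Psy : 0 < sy) by (apply sin_gt_0; unfold y; lra).
  assert (Pcx : 0 < cx) by (apply cos_gt_0; unfold x; lra).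
  assert (Pcy : 0 < cy) by (apply cos_gt_0; unfold y; lra).
  assert (PP : 0 < P) by (rewrite <- HP; apply sin_gt_0; lra).
  assert (PQ : 0 < - Q) by (rewrite <- HQ; apply cos_gt_0; lra).
  assert (PE : 0 <= E) by (rewrite <- HE; apply sin_ge_0; lra).
  assert (PC : 0 < C) by (rewrite <- HC; apply cos_gt_0; lra).
  assert (F1 : sin a1 + sin a2 + sin a3 = 4 * sx * sy * P).
  { rewrite S1, S2, S3.
    assert (2 * sx * cx + 2 * sy * cy + 2 * P * - Q - 4 * sx * sy * P
      = - 2 * (sx * cx * (sy^2 + cy^2 - 1) + sy * cy * (sx^2 + cx^2 - 1))) by (unfold P, Q; ring).
    rewrite px, py in H. lra. }
  assert (F2 : sin a1 + sin a2 = 2 * P * C).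
  { rewrite S1, S2.
    assert (2 * sx * cx + 2 * sy * cy - 2 * P * C
      = - 2 * (sx * cx * (sy^2 + cy^2 - 1) + sy * cy * (sx^2 + cx^2 - 1))) by (unfold P, C; ring).
    rewrite px, py in H. lra. }
  assert (F3 : sin a1 - sin a2 = - 2 * Q * E).
  { rewrite S1, S2.
    assert (sx * cx - sy * cy + Q * E
      = sy * cy * (sx^2 + cx^2 - 1) - sx * cx * (sy^2 + cy^2 - 1)) by (unfold Q, E; ring).
    rewrite px, py in H. lra. }
  assert (F4 : C^2 + E^2 = 1).
  { assert (C^2 + E^2 = (sx^2 + cx^2) * (sy^2 + cy^2)) by (unfold C, E; ring).
    rewrite px, py in H. lra. }
  assert (G1 : C - Q = 2 * sx * sy) by (unfold C, Q; ring).
  assert (G2 : P - E = 2 * sx * cy) by (unfold P, E; ring).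
  assert (G3 : C * P + Q * E = 2 * sy * cy).
  { assert (C * P + Q * E - 2 * sy * cy = 2 * sy * cy * (sx^2 + cx^2 - 1)) by (unfold C, P, Q, E; ring).
    rewrite px in H. lra. }
  rewrite F1, HP, HE, HQ, HC.
  replace ((P - E) * sin a2 + (P + E) * sin a1) with (P * (sin a1 + sin a2) + E * (sin a1 - sin a2)) by ring.
  rewrite F2, F3.
  replace (4 * sx * sy * P) with (2 * (C - Q) * P) by (rewrite G1; ring).
  replace (- Q + C) with (C - Q) by ring.
  assert (K1 : 0 < P^2 * C - Q * E^2 - (C - Q) * P * E).
  { replace (P^2 * C - Q * E^2 - (C - Q) * P * E) with ((P - E) * (C * P + Q * E)) by ring.
    rewrite G2, G3. apply Rmult_lt_0_compat; apply Rmult_lt_0_compat; try apply Rmult_lt_0_compat; lra. }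
  assert (K2 : 0 <= P^2 * C - Q * E^2 + (C - Q) * P * E).
  { assert (0 <= (C - Q) * P * E) by (apply Rmult_le_pos; try apply Rmult_le_pos; lra).
    assert (0 <= - Q * E^2) by (apply Rmult_le_pos; nra).
    assert (0 <= P^2 * C) by (apply Rmult_le_pos; nra). lra. }
  assert (K : 0 < (P^2 * C - Q * E^2 - (C - Q) * P * E) * (P^2 * C - Q * E^2 + (C - Q) * P * E)).
  { assert (0 < P^2 * C) by (apply Rmult_lt_0_compat; nra).
    assert (0 <= - Q * E^2) by (apply Rmult_le_pos; nra).
    assert (0 <= (C - Q) * P * E) by (apply Rmult_le_pos; try apply Rmult_le_pos; lra).
    apply Rmult_lt_0_compat; lra. }
  assert (Id : (2 * P * P * C + E * (-2 * Q * E)) ^ 2 + (2 * P * C * (C - Q)) ^ 2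
     - (2 * (C - Q) * P) ^ 2
     = 4 * ((P^2 * C - Q * E^2 - (C - Q) * P * E) * (P^2 * C - Q * E^2 + (C - Q) * P * E))
       + 4 * (C - Q)^2 * P^2 * (C^2 + E^2 - 1)) by ring.
  rewrite F4 in Id.
  replace (P * (2 * P * C)) with (2 * P * P * C) by ring.
  lra.
Qed.

Theorem mainTheorem7 (a1 a2 a3 : R) :
  0 < a1 < PI -> 0 < a2 < PI -> 0 < a3 < PI ->
  a1 + a2 + a3 = 2 * PI -> a1 <= a2 ->
  ((sin a1 + sin a2 + sin a3) ^ 2 <
     ((sin (a3 / 2) - sin ((a2 - a1) / 2)) * sin a2
      + (sin (a3 / 2) + sin ((a2 - a1) / 2)) * sin a1) ^ 2
     + ((sin a1 + sin a2) * (cos (a3 / 2) + cos ((a2 - a1) / 2))) ^ 2)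
  /\
  (forall s12 s13 s23 : R, 0 < s12 -> 0 < s13 -> 0 < s23 ->
     sin a1 / s23 = sin a2 / s13 -> sin a2 / s13 = sin a3 / s12 ->
     (s12 + s13 + s23) ^ 2 <
       ((sin (a3 / 2) - sin ((a2 - a1) / 2)) * s13
        + (sin (a3 / 2) + sin ((a2 - a1) / 2)) * s23) ^ 2
       + ((s13 + s23) * (cos (a3 / 2) + cos ((a2 - a1) / 2))) ^ 2).
Proof.
  intros H1 H2 H3 Hs Hle.
  pose proof (part1 a1 a2 a3 H1 H2 H3 Hs Hle) as HP1.
  split; [exact HP1|].
  intros s12 s13 s23 h12 h13 h23 e1 e2.
  assert (Ps2 : 0 < sin a2) by (apply sin_gt_0; lra).
  set (k := sin a2 / s13) in *.
  assert (Pk : 0 < k) by (unfold k; apply Rdiv_lt_0_compat; lra).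
  assert (E23 : s23 = sin a1 / k).
  { assert (HH : sin a1 = k * s23) by (rewrite <- e1; field; lra).
    rewrite HH; field; lra. }
  assert (E13 : s13 = sin a2 / k) by (unfold k; field; lra).
  assert (E12 : s12 = sin a3 / k).
  { assert (HH : sin a3 = k * s12) by (rewrite e2; field; lra).
    rewrite HH; field; lra. }
  clearbody k.
  rewrite E23, E13, E12.
  set (A := sin (a3/2)) in *. set (B := sin ((a2 - a1)/2)) in *.
  set (c1 := cos (a3/2)) in *. set (c2 := cos ((a2 - a1)/2)) in *.
  set (t := / k).
  assert (Pt : 0 < t) by (unfold t; apply Rinv_0_lt_compat; lra).
  unfold Rdiv. fold t.
  apply (Rmult_lt_compat_l (t^2)) in HP1; [|nra].
  match goal with |- ?L < ?R => replace L with (t^2 * (sin a1 + sin a2 + sin a3) ^ 2) by ring;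
     replace R with (t^2 * (((A - B) * sin a2 + (A + B) * sin a1) ^ 2 + ((sin a1 + sin a2) * (c1 + c2)) ^ 2)) by ring end.
  exact HP1.
Qed.
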